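(* Let $\mathcal{U}$ be a finite-dimensional real Hilbert space, let $\mathcal{W}$ be a real Hilbert space, let $\phi:\mathcal{U}\to\mathcal{B}(\mathcal{U},\mathcal{W})$ be a map with associated kernel $k(v_1,v_2)=\phi(v_1)^*\phi(v_2)\in\mathcal{B}(\mathcal{U})$, let $(u_i,y_i)\in\mathcal{U}\times\mathcal{U}$, $i=1,\dots,n$, be data and let $\gamma>0$. Let $\Phi\in\mathcal{B}(\mathcal{U}^n,\mathcal{W})$ be $\Phi(v_1,\dots,v_n)=\sum_i\phi(u_i)v_i$; for $u\in\mathcal{U}$ let $\kappa(u)=\Phi^*\phi(u)\in\mathcal{B}(\mathcal{U},\mathcal{U}^n)$, i.e. $\kappa(u)v=(k(u_1,u)v,\dots,k(u_n,u)v)$; let $K_i=\kappa(u_i)$; let $K=\Phi^*\Phi\in\mathcal{B}(\mathcal{U}^n)$ be the Gram operator with $(i,j)$ block $k(u_i,u_j)$, and $K^{1/2}$ its self-adjoint nonnegative square root. Let $L(Q)=\sum_{i=1}^n\|\phi(u_i)^*Q\phi(u_i)u_i-y_i\|_{\mathcal{U}}^2$ for $Q\in\mathcal{B}(\mathcal{W})$. If the problem $\min_{Q\in\mathcal{B}^+(\mathcal{W})}L(Q)+\gamma\|Q\|$ has a solution, then a solution of it is given by $\hat Q=\Phi M\Phi^*$, where $M\in\mathcal{B}^+(\mathcal{U}^n)$ is a solution of $$\min_{M\in\mathcal{B}^+(\mathcal{U}^n)}\ \sum_{i=1}^n\|K_i^*MK_iu_i-y_i\|_{\mathcal{U}}^2+\gamma\|K^{1/2}MK^{1/2}\|.$$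 Moreover, the operator $G:\mathcal{U}\to\mathcal{U}$, $Gu=\phi(u)^*\hat Q\phi(u)u$, corresponding to this solution satisfies $Gu=\kappa(u)^*M\kappa(u)u$ for all $u\in\mathcal{U}$.
   Context: $\mathcal{U}^n$ is the $n$-fold Cartesian product with inner product $\sum_i\langle u_i,v_i\rangle_{\mathcal{U}}$. $\mathcal{B}(\mathcal{X},\mathcal{Y})$ denotes bounded linear operators, $\mathcal{B}(\mathcal{X})=\mathcal{B}(\mathcal{X},\mathcal{X})$, $^*$ is the adjoint, $\|\cdot\|$ the operator norm. An operator $G$ on a Hilbert space $\mathcal{H}$ is nonnegative if $\langle Gu,u\rangle_{\mathcal{H}}\ge0$ for all $u$ (self-adjointness not required); $\mathcal{B}^+(\mathcal{H})$ is the set of nonnegative operators in $\mathcal{B}(\mathcal{H})$. *)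

(* Defs.v *)
From HB Require Import structures.
From mathcomp Require Import all_boot all_order all_algebra.
From mathcomp Require Import boolp classical_sets reals.
Set Implicit Arguments. Unset Strict Implicit. Unset Printing Implicit Defensive.
Import Order.TTheory GRing.Theory Num.Theory.
Local Open Scope ring_scope.
Local Open Scope classical_set_scope.

Section Hilbert.
Variable R : realType.

Definition is_inner_product (V : lmodType R) (ip : V -> V -> R) : Prop :=
  [/\ (forall x y, ip x y = ip y x),
      (forall a x y z, ip (a *: x + y) z = a * ip x z + ip y z),
      (forall x, 0 <= ip x x) &
      (forall x, ip x x = 0 -> x = 0)].

Definition ipnorm (V : lmodType R) (ip : V -> V -> R) (x : V) : R :=
  Num.sqrt (ip x x).

Definition is_hilbert (V : lmodType R) (ip : V -> V -> R) : Prop :=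
  is_inner_product ip /\
  forall s : nat -> V,
    (forall e : R, 0 < e -> exists N : nat, forall m k : nat, (N <= m)%N -> (N <= k)%N ->
        ipnorm ip (s m - s k) < e) ->
    exists l : V, forall e : R, 0 < e -> exists N : nat, forall m : nat, (N <= m)%N ->
        ipnorm ip (s m - l) < e.

Definition is_bounded_op (V W : lmodType R) (ipV : V -> V -> R) (ipW : W -> W -> R)
  (A : V -> W) : Prop :=
  (forall a x y, A (a *: x + y) = a *: A x + A y) /\
  exists C : R, forall x, ipnorm ipW (A x) <= C * ipnorm ipV x.

Definition opnorm (V W : lmodType R) (ipV : V -> V -> R) (ipW : W -> W -> R)
  (A : V -> W) : R :=
  sup [set ipnorm ipW (A x) | x in [set x : V | ipnorm ipV x <= 1]].

Definition adjoint (V W : lmodType R) (ipV : V -> V -> R) (ipW : W -> W -> R)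
  (A : V -> W) : W -> V :=
  fun w => xget 0 [set v : V | forall x, ipV v x = ipW w (A x)].

(* nonnegative operator (self-adjointness not required) *)
Definition is_nonneg_op (V : lmodType R) (ip : V -> V -> R) (G : V -> V) : Prop :=
  forall u, 0 <= ip (G u) u.

Definition is_Bplus (V : lmodType R) (ip : V -> V -> R) (G : V -> V) : Prop :=
  is_bounded_op ip ip G /\ is_nonneg_op ip G.

Definition op_sqrt (V : lmodType R) (ip : V -> V -> R) (K : V -> V) : V -> V :=
  xget (fun _ => 0) [set S : V -> V | [/\ is_bounded_op ip ip S,
        adjoint ip ip S = S, is_nonneg_op ip S & S \o S = K]].

Definition ip_pow (U : lmodType R) (ipU : U -> U -> R) (n : nat)
  (v w : {ffun 'I_n -> U}) : R := \sum_(i < n) ipU (v i) (w i).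

End Hilbert.

(* Main.v *)
Require Import Defs.
From HB Require Import structures.
From mathcomp Require Import all_boot all_order all_algebra.
From mathcomp Require Import boolp classical_sets reals.
From mathcomp Require Import complex.
From mathcomp Require Import ring lra.
Set Implicit Arguments. Unset Strict Implicit. Unset Printing Implicit Defensive.
Import Order.TTheory GRing.Theory Num.Theory.
Local Open Scope ring_scope.
Local Open Scope classical_set_scope.

Definition lin (R : realType) (V W : lmodType R) (A : V -> W) :=
  forall a x y, A (a *: x + y) = a *: A x + A y.

Section Lin.
Variables (R : realType) (V W : lmodType R) (A : V -> W) (hA : lin A).
Lemma lin0 : A 0 = 0.
Proof.
have := hA 1 0 0; rewrite !scale1r addr0 => /(congr1 (fun z => z - A 0)).
by rewrite addrK subrr.
Qed.
Lemma linD x y : A (x + y) = A x + A y.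
Proof. by have := hA 1 x y; rewrite !scale1r. Qed.
Lemma linZ a x : A (a *: x) = a *: A x.
Proof. by have := hA a x 0; rewrite !addr0 lin0 addr0. Qed.
Lemma linN x : A (- x) = - A x.
Proof. by rewrite -scaleN1r linZ scaleN1r. Qed.
Lemma linB x y : A (x - y) = A x - A y.
Proof. by rewrite linD linN. Qed.
Lemma lin_sum I (r : seq I) (P : pred I) (F : I -> V) :
  A (\sum_(i <- r | P i) F i) = \sum_(i <- r | P i) A (F i).
Proof. exact: (big_morph A linD lin0). Qed.
End Lin.

Lemma lin_comp (R : realType) (U V W : lmodType R) (A : V -> W) (B : U -> V) :
  lin A -> lin B -> lin (A \o B).
Proof. by move=> hA hB a x y /=; rewrite hB hA. Qed.

Section IP.
Variables (R : realType) (V : lmodType R) (ip : V -> V -> R).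
Hypothesis hip : is_inner_product ip.

Lemma ipC x y : ip x y = ip y x.
Proof. by case: hip. Qed.
Lemma ipl_lin z : lin (fun x : V => (ip x z : R^o)).
Proof. by case: hip => _ h _ _ a x y; rewrite h. Qed.
Lemma ipr_lin z : lin (fun x : V => (ip z x : R^o)).
Proof. by move=> a x y; rewrite !(ipC z); apply: ipl_lin. Qed.
Lemma ip_ge0 x : 0 <= ip x x. Proof. by case: hip. Qed.
Lemma ip_eq0 x : ip x x = 0 -> x = 0. Proof. by case: hip => _ _ _; apply. Qed.

Lemma ip0l z : ip 0 z = 0. Proof. exact: (lin0 (ipl_lin z)). Qed.
Lemma ip0r z : ip z 0 = 0. Proof. exact: (lin0 (ipr_lin z)). Qed.
Lemma ipDl x y z : ip (x + y) z = ip x z + ip y z. Proof. exact: (linD (ipl_lin z)). Qed.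
Lemma ipDr x y z : ip z (x + y) = ip z x + ip z y. Proof. exact: (linD (ipr_lin z)). Qed.
Lemma ipZl a x z : ip (a *: x) z = a * ip x z. Proof. exact: (linZ (ipl_lin z)). Qed.
Lemma ipZr a x z : ip z (a *: x) = a * ip z x. Proof. exact: (linZ (ipr_lin z)). Qed.
Lemma ipNl x z : ip (- x) z = - ip x z. Proof. exact: (linN (ipl_lin z)). Qed.
Lemma ipNr x z : ip z (- x) = - ip z x. Proof. exact: (linN (ipr_lin z)). Qed.
Lemma ipBl x y z : ip (x - y) z = ip x z - ip y z. Proof. exact: (linB (ipl_lin z)). Qed.
Lemma ipBr x y z : ip z (x - y) = ip z x - ip z y. Proof. exact: (linB (ipr_lin z)). Qed.
Lemma ip_suml I (r : seq I) (P : pred I) (F : I -> V) z :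
  ip (\sum_(i <- r | P i) F i) z = \sum_(i <- r | P i) ip (F i) z.
Proof. exact: (lin_sum (ipl_lin z)). Qed.
Lemma ip_sumr I (r : seq I) (P : pred I) (F : I -> V) z :
  ip z (\sum_(i <- r | P i) F i) = \sum_(i <- r | P i) ip z (F i).
Proof. exact: (lin_sum (ipr_lin z)). Qed.

Lemma ip_nondeg x y : (forall z, ip x z = ip y z) -> x = y.
Proof.
move=> h; apply/eqP; rewrite -subr_eq0; apply/eqP/ip_eq0.
by rewrite ipBl h subrr.
Qed.

Lemma ipnorm_le x y : ip x x <= ip y y -> ipnorm ip x <= ipnorm ip y.
Proof. by move=> h; rewrite /ipnorm ler_sqrt // ip_ge0. Qed.

Lemma ipnorm_le1 x : ipnorm ip x <= 1 = (ip x x <= 1).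
Proof. by rewrite /ipnorm -{1}sqrtr1 ler_sqrt // ler01. Qed.

Lemma ipnorm_ge0 x : 0 <= ipnorm ip x. Proof. exact: sqrtr_ge0. Qed.

Definition orthonormal (k : nat) (e : 'I_k -> V) :=
  forall i j, ip (e i) (e j) = (i == j)%:R.

Lemma sum_delta (k : nat) (c : 'I_k -> R) j :
  \sum_i c i * (i == j)%:R = c j.
Proof.
rewrite (bigD1 j) //= eqxx mulr1 big1 ?addr0 // => i /negbTE ->.
by rewrite mulr0.
Qed.

Lemma sum_delta' (k : nat) (c : 'I_k -> R) j :
  \sum_i c i * (j == i)%:R = c j.
Proof. by under eq_bigr do rewrite eq_sym; apply: sum_delta. Qed.

Lemma ip_sumZl I (r : seq I) (P : pred I) (c : I -> R) (F : I -> V) z :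
  ip (\sum_(i <- r | P i) c i *: F i) z = \sum_(i <- r | P i) c i * ip (F i) z.
Proof. by rewrite ip_suml; apply: eq_bigr => i _; rewrite ipZl. Qed.
Lemma ip_sumZr I (r : seq I) (P : pred I) (c : I -> R) (F : I -> V) z :
  ip z (\sum_(i <- r | P i) c i *: F i) = \sum_(i <- r | P i) c i * ip z (F i).
Proof. by rewrite ip_sumr; apply: eq_bigr => i _; rewrite ipZr. Qed.

Lemma orth_coef (k : nat) (e : 'I_k -> V) (c : 'I_k -> R) j :
  orthonormal e -> ip (\sum_i c i *: e i) (e j) = c j.
Proof.
move=> he; rewrite ip_sumZl; under eq_bigr do rewrite he.
exact: sum_delta.
Qed.

Lemma orth_parseval (k : nat) (e : 'I_k -> V) (c d : 'I_k -> R) :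
  orthonormal e -> ip (\sum_i c i *: e i) (\sum_i d i *: e i) = \sum_i c i * d i.
Proof.
move=> he; rewrite ip_sumZr; apply: eq_bigr => i _.
by rewrite orth_coef // mulrC.
Qed.

Definition ext_fam (k : nat) (e : 'I_k -> V) (x : V) : 'I_k.+1 -> V :=
  fun i => if unlift ord_max i is Some j then e j else x.

Lemma ext_fam_lift (k : nat) (e : 'I_k -> V) x (j : 'I_k) :
  ext_fam e x (lift ord_max j) = e j.
Proof. by rewrite /ext_fam liftK. Qed.
Lemma ext_fam_max (k : nat) (e : 'I_k -> V) x :
  ext_fam e x ord_max = x.
Proof. by rewrite /ext_fam unlift_none. Qed.

Lemma orthonormal_ext (k : nat) (e : 'I_k -> V) x :
  orthonormal e -> (forall i, ip x (e i) = 0) -> ip x x = 1 ->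
  orthonormal (ext_fam e x).
Proof.
move=> he hx hxx i j.
case: (unliftP ord_max i) => [i'|] ->; case: (unliftP ord_max j) => [j'|] ->;
  rewrite ?ext_fam_lift ?ext_fam_max.
- by rewrite he (inj_eq (@lift_inj _ _)).
- by rewrite ipC hx eq_sym (negbTE (neq_lift _ _)).
- by rewrite hx (negbTE (neq_lift _ _)).
- by rewrite hxx eqxx.
Qed.

Lemma normalize x : x != 0 -> exists2 y, ip y y = 1 & exists a : R, y = a *: x.
Proof.
move=> x0; have hpos : 0 < ip x x.
  rewrite lt_def ip_ge0 andbT; apply/eqP => /ip_eq0 h; by rewrite h eqxx in x0.
pose s := Num.sqrt (ip x x).
have s0 : s != 0 by rewrite /s sqrtr_eq0 -ltNge.
exists (s^-1 *: x); last by exists s^-1.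
rewrite ipZl ipZr mulrA -expr2 exprVn sqr_sqrtr ?ip_ge0 // mulVf //.
by rewrite gt_eqF.
Qed.

End IP.

Lemma max_principle (P : nat -> Prop) (N : nat) :
  P 0%N -> (forall k, P k -> (k <= N)%N) -> exists k, P k /\ ~ P k.+1.
Proof.
move=> P0 hb; apply: contrapT => hn.
have hall : forall k, P k by elim=> // k IH; apply: contrapT => hk; apply: hn; exists k.
by have := hb _ (hall N.+1); rewrite ltnn.
Qed.

Section Eig.
Variable R : realType.

Lemma Re_add (x y : R[i]) : complex.Re (x + y) = complex.Re x + complex.Re y.
Proof. by case: x => a b; case: y => c d /=. Qed.
Lemma Im_add (x y : R[i]) : complex.Im (x + y) = complex.Im x + complex.Im y.
Proof. by case: x => a b; case: y => c d /=. Qed.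
Lemma Re_sum (I : Type) (r : seq I) (P : pred I) (F : I -> R[i]) :
  complex.Re (\sum_(i <- r | P i) F i) = \sum_(i <- r | P i) complex.Re (F i).
Proof. exact: (big_morph (@complex.Re R) Re_add). Qed.
Lemma Im_sum (I : Type) (r : seq I) (P : pred I) (F : I -> R[i]) :
  complex.Im (\sum_(i <- r | P i) F i) = \sum_(i <- r | P i) complex.Im (F i).
Proof. exact: (big_morph (@complex.Im R) Im_add). Qed.
Lemma Re_mulr (c : R[i]) (r : R) : complex.Re (c * (r%:C)%C) = complex.Re c * r.
Proof. by case: c => a b /=; rewrite mulr0 subr0. Qed.
Lemma Im_mulr (c : R[i]) (r : R) : complex.Im (c * (r%:C)%C) = complex.Im c * r.
Proof. by case: c => a b /=; rewrite mulr0 add0r. Qed.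
Lemma Re_mul (c d : R[i]) : complex.Re (c * d) = complex.Re c * complex.Re d - complex.Im c * complex.Im d.
Proof. by case: c => a b; case: d => c d /=. Qed.
Lemma Im_mul (c d : R[i]) : complex.Im (c * d) = complex.Re c * complex.Im d + complex.Im c * complex.Re d.
Proof. by case: c => a b; case: d => c d /=. Qed.


Lemma sqsum_eq0 (m : nat) (u : 'rV[R]_m) : (u *m u^T) 0 0 = 0 -> u = 0.
Proof.
rewrite !mxE => h; apply/rowP => j; rewrite mxE.
have hge : forall k : 'I_m, true -> 0 <= u 0 k * u^T k 0.
  by move=> k _; rewrite mxE -expr2 sqr_ge0.
have := @psumr_eq0P _ _ _ _ hge h j isT.
by rewrite mxE => /eqP; rewrite mulf_eq0 orbb => /eqP.
Qed.

Lemma sqsum_ge0 (m : nat) (u : 'rV[R]_m) : 0 <= (u *m u^T) 0 0.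
Proof. by rewrite mxE sumr_ge0 // => k _; rewrite mxE -expr2 sqr_ge0. Qed.

Lemma sym_eigen (m : nat) (A : 'M[R]_m.+1) : A^T = A ->
  exists2 w : 'rV[R]_m.+1, w != 0 & exists a : R, w *m A = a *: w.
Proof.
move=> hA.
pose AC := map_mx (real_complex R) A.
have : size (char_poly AC) != 1%N by rewrite size_char_poly.
move/closed_rootP => [z rz].
have : eigenvalue AC z by rewrite eigenvalue_root_char.
move/eigenvalueP => [v hv v0].
pose x := \row_j complex.Re (v 0 j).
pose y := \row_j complex.Im (v 0 j).
have hent : forall j, \sum_k v 0 k * ((A k j)%:C)%C = z * v 0 j.
  move=> j; have := congr1 (fun M : 'M_(1, m.+1) => M 0 j) hv; rewrite /= !mxE => <-.
  by apply: eq_bigr => k _; rewrite mxE.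
case: z hent rz hv => a b hent _ _.
have hx : x *m A = a *: x - b *: y.
  apply/rowP => j; rewrite !mxE.
  have := congr1 (@complex.Re R) (hent j); rewrite Re_sum Re_mul /= => <-.
  by apply: eq_bigr => k _; rewrite Re_mulr !mxE.
have hy : y *m A = a *: y + b *: x.
  apply/rowP => j; rewrite !mxE.
  have := congr1 (@complex.Im R) (hent j); rewrite Im_sum Im_mul /= => <-.
  by apply: eq_bigr => k _; rewrite Im_mulr !mxE.
have key : (x *m A) *m y^T = x *m (y *m A)^T.
  by rewrite trmx_mul hA mulmxA.
rewrite hx hy mulmxBl linearD /= !linearZ /= mulmxDr -!scalemxAl -!scalemxAr in key.
have hb : b * ((x *m x^T) 0 0 + (y *m y^T) 0 0) = 0.
  move: key; move: (x *m y^T) (y *m y^T) (x *m x^T) => XY YY XX key.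
  have := congr1 (fun M : 'M_1 => M 0 0) key; rewrite !mxE => h.
  have e : b * (XX 0 0 + YY 0 0) = (a * XY 0 0 + b * XX 0 0) - (a * XY 0 0 - b * YY 0 0).
    by ring.
  by rewrite e h subrr.
have vxy : v = 0 -> False by move=> h; rewrite h eqxx in v0.
have b0 : b = 0.
  apply/eqP; apply: contraT => bn0; exfalso; apply: vxy.
  move: hb => /eqP; rewrite mulf_eq0 (negbTE bn0) /= => /eqP hs.
  have hx0 : (x *m x^T) 0 0 = 0.
    by apply/le_anti; rewrite sqsum_ge0 andbT -hs lerDl sqsum_ge0.
  have hy0 : (y *m y^T) 0 0 = 0 by move: hs; rewrite hx0 add0r.
  move: (sqsum_eq0 hx0) (sqsum_eq0 hy0) => /rowP hx' /rowP hy'.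
  apply/rowP => j; rewrite mxE; have := hx' j; have := hy' j; rewrite !mxE.
  by case: (v 0 j) => p q /= -> ->.
rewrite b0 scale0r subr0 in hx; rewrite b0 scale0r addr0 in hy.
have [x0|xn0] := eqVneq x 0.
  exists y; last by exists a.
  apply/eqP => y0; apply: vxy; apply/rowP => j; rewrite mxE.
  move/rowP: x0 => /(_ j); move/rowP: y0 => /(_ j); rewrite !mxE.
  by case: (v 0 j) => p q /= -> ->.
by exists x => //; exists a.
Qed.

End Eig.

Section Fin.
Variables (R : realType) (V : vectType R) (ip : V -> V -> R).
Hypothesis hip : is_inner_product ip.

Lemma orth_dim (k : nat) (e : 'I_k -> V) :
  orthonormal ip e -> (k <= \dim (fullv : {vspace V}))%N.
Proof.
move=> he.
have hf : free [tuple e i | i < k].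
  apply/freeP => c hc i.
  have := congr1 (fun z => ip z (e i)) hc.
  rewrite /= ip0l //; under eq_bigr do rewrite nth_mktuple.
  by rewrite orth_coef.
move: hf; rewrite /free size_tuple => /eqP <-.
exact: dimvS (subvf _).
Qed.

Lemma onb_compl (k : nat) (e : 'I_k -> V) : orthonormal ip e ->
  exists m (c : 'I_m -> V), [/\ orthonormal ip c,
    (forall j i, ip (c j) (e i) = 0) &
    forall x, (forall i, ip x (e i) = 0) -> x = \sum_j ip x (c j) *: c j].
Proof.
move=> he.
pose P := fun m => exists c : 'I_m -> V, orthonormal ip c /\ forall j i, ip (c j) (e i) = 0.
have P0 : P 0%N by exists (fun _ => 0); split; case.
have Pb : forall m, P m -> (m <= \dim (fullv : {vspace V}))%N.
  by move=> m' [c' [hc' _]]; exact: orth_dim hc'.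
have [m [[c [hc hce]] hn]] := max_principle P0 Pb.
exists m, c; split => // x hx.
set y := x - \sum_j ip x (c j) *: c j.
have hyc : forall j, ip y (c j) = 0.
  by move=> j; rewrite /y ipBl // orth_coef // subrr.
have hye : forall i, ip y (e i) = 0.
  move=> i; rewrite /y ipBl // hx ip_sumZl //.
  by rewrite big1 ?subrr // => j _; rewrite hce mulr0.
have : y = 0.
  apply: contrapT => /eqP yn0; apply: hn.
  have [y' hy' [a hya]] := normalize hip yn0; subst y'.
  exists (ext_fam c (a *: y)); split.
    by apply: orthonormal_ext => // j; rewrite ipZl // hyc mulr0.
  move=> j i; case: (unliftP ord_max j) => [j'|] ->.
    by rewrite ext_fam_lift hce.
  by rewrite ext_fam_max ipZl // hye mulr0.
by move/eqP; rewrite subr_eq0 => /eqP.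
Qed.

Lemma onb_exists : exists d (b : 'I_d -> V),
  orthonormal ip b /\ forall x, x = \sum_i ip x (b i) *: b i.
Proof.
have e0 : orthonormal ip (fun i : 'I_0 => (0 : V)) by case.
have [d [b [hb _ hx]]] := onb_compl e0.
by exists d, b; split => // x; apply: hx; case.
Qed.


Lemma spectral (T : V -> V) : lin T -> (forall x y, ip (T x) y = ip x (T y)) ->
  exists d (e : 'I_d -> V), [/\ orthonormal ip e,
    (forall i, T (e i) = ip (T (e i)) (e i) *: e i) &
    forall x, x = \sum_i ip x (e i) *: e i].
Proof.
move=> hT hs.
pose P := fun k => exists e : 'I_k -> V, orthonormal ip e /\
  forall i, T (e i) = ip (T (e i)) (e i) *: e i.
have P0 : P 0%N by exists (fun _ => 0); split; case.
have Pb : forall m, P m -> (m <= \dim (fullv : {vspace V}))%N.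
  by move=> m' [c' [hc' _]]; exact: orth_dim hc'.
have [k [[e [he hTe]] hn]] := max_principle P0 Pb.
suff hperp : forall x, (forall i, ip x (e i) = 0) -> x = 0.
  exists k, e; split => // x.
  apply/eqP; rewrite -subr_eq0; apply/eqP/hperp => i.
  by rewrite ipBl // orth_coef // subrr.
have [m [c [hc hce hcomp]]] := onb_compl he.
move=> x hx; case: m c hc hce hcomp => [|m] c hc hce hcomp.
  by rewrite (hcomp x hx) big_ord0.
exfalso; apply: hn.
have hTperp : forall x, (forall i, ip x (e i) = 0) -> forall i, ip (T x) (e i) = 0.
  by move=> y hy i; rewrite hs hTe ipZr // hy mulr0.
pose A := \matrix_(i, j) ip (T (c i)) (c j) : 'M[R]_m.+1.
have hA : A^T = A.
  by apply/matrixP => i j; rewrite !mxE hs ipC.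
have [w w0 [a hw]] := sym_eigen hA.
pose z := \sum_j w 0 j *: c j.
have hzc : forall j, ip z (c j) = w 0 j by move=> j; rewrite orth_coef.
have hze : forall i, ip z (e i) = 0.
  by move=> i; rewrite ip_sumZl // big1 // => j _; rewrite hce mulr0.
have hTz : T z = a *: z.
  rewrite (hcomp _ (hTperp _ hze)) /z scaler_sumr; apply: eq_bigr => j _.
  rewrite scalerA; congr (_ *: _).
  have := congr1 (fun M : 'M_(1, m.+1) => M 0 j) hw; rewrite /= !mxE => <-.
  rewrite (lin_sum hT) ip_suml //; apply: eq_bigr => i _.
  by rewrite (linZ hT) ipZl // mxE.
have zn0 : z != 0.
  apply/eqP => z0; move/eqP: w0; apply; apply/rowP => j.
  by rewrite -hzc z0 ip0l // mxE.
have [z' hz' [r hr]] := normalize hip zn0; subst z'.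
have hTz0 : T (r *: z) = a *: (r *: z) by rewrite (linZ hT) hTz !scalerA mulrC.
have hTz' : T (r *: z) = ip (T (r *: z)) (r *: z) *: (r *: z).
  by rewrite {2}hTz0 ipZl // hz' mulr1.
exists (ext_fam e (r *: z)); split.
  by apply: orthonormal_ext => // i; rewrite ipZl // hze mulr0.
move=> i; case: (unliftP ord_max i) => [i'|] ->.
  by rewrite ext_fam_lift; exact: hTe.
by rewrite ext_fam_max.
Qed.

End Fin.

Section Adj.
Variables (R : realType) (V : vectType R) (ip : V -> V -> R).
Hypothesis hip : is_inner_product ip.
Variables (W : lmodType R) (ipW : W -> W -> R).
Hypothesis hipW : is_inner_product ipW.

Lemma adjointP (A : V -> W) : lin A ->
  forall w x, ip (adjoint ip ipW A w) x = ipW w (A x).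
Proof.
move=> hA w; rewrite /adjoint.
have [d [b [hb hx]]] := onb_exists hip.
have := @xgetPex _ 0 [set v : V | forall x, ip v x = ipW w (A x)]; apply.
exists (\sum_j ipW w (A (b j)) *: b j) => x.
rewrite ip_sumZl // {2}(hx x) (lin_sum hA) ip_sumr //; apply: eq_bigr => j _.
by rewrite (linZ hA) (ipZr hipW) (ipC hip (b j)) mulrC.
Qed.

Lemma adjoint_lin (A : V -> W) : lin A -> lin (adjoint ip ipW A).
Proof.
move=> hA a w w'; apply: (ip_nondeg hip) => z.
by rewrite ipDl // ipZl // !adjointP // ipDl // ipZl.
Qed.

Lemma fin_bounded (A : V -> W) : lin A ->
  exists2 C, 0 <= C & forall x, ipnorm ipW (A x) <= C * ipnorm ip x.
Proof.
move=> hA.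
have [d [b [hb hx]]] := onb_exists hip.
pose g := fun j k => ipW (A (b j)) (A (b k)).
pose G := \sum_j \sum_k `|g j k|.
exists (Num.sqrt (2 * G)); first exact: sqrtr_ge0.
move=> x; rewrite /ipnorm -sqrtrM; last by rewrite mulr_ge0 // sumr_ge0 // => j _; rewrite sumr_ge0.
rewrite ler_sqrt; last by rewrite !mulr_ge0 ?ip_ge0 // sumr_ge0 // => j _; rewrite sumr_ge0.
pose c := fun j => ip x (b j).
have hN : ip x x = \sum_j c j ^+ 2.
  rewrite {2}(hx x) ip_sumZr //; apply: eq_bigr => j _; by rewrite expr2.
have hcN : forall j, c j ^+ 2 <= ip x x.
  move=> j; rewrite hN (bigD1 j) //= lerDl sumr_ge0 // => i _; exact: sqr_ge0.
set N := ip x x.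
rewrite {1 2}(hx x) (lin_sum hA) ip_suml // mulrAC /G mulr_sumr.
apply: ler_sum => j _; rewrite ip_sumr // mulr_sumr; apply: ler_sum => k _.
rewrite !(linZ hA) ipZl // ipZr // -/(c j) -/(c k) -/(g j k).
have h1 : c j * (c k * g j k) <= `|c j| * `|c k| * `|g j k|.
  by rewrite -!normrM mulrA ler_norm.
apply: (le_trans h1); apply: ler_wpM2r => //.
have hk := hcN k; have hj := hcN j.
have : `|c j| * `|c k| <= c j ^+ 2 + c k ^+ 2.
  rewrite -(real_normK (num_real (c k))) -(real_normK (num_real (c j))).
  have := normr_ge0 (c k); have := normr_ge0 (c j). nra.
rewrite -/N in hk hj. nra.
Qed.

End Adj.

Section Opnorm.
Variables (R : realType) (X Y : lmodType R) (ipX : X -> X -> R) (ipY : Y -> Y -> R).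
Hypothesis hipX : is_inner_product ipX.

Lemma opnorm_ub (A : X -> Y) :
  (exists C, forall x, ipnorm ipY (A x) <= C * ipnorm ipX x) ->
  forall x, ipnorm ipX x <= 1 -> ipnorm ipY (A x) <= opnorm ipX ipY A.
Proof.
move=> [C hC] x hx; rewrite /opnorm.
have hub : has_ubound [set ipnorm ipY (A x) | x in [set x : X | ipnorm ipX x <= 1]].
  exists `|C| => _ [y hy <-]; apply: (le_trans (hC y)).
  have hy0 := ipnorm_ge0 ipX y.
  apply: (le_trans (y := `|C| * ipnorm ipX y)).
    by apply: ler_wpM2r => //; exact: ler_norm.
  by apply: ler_piMr => //.
by apply: ub_le_sup => //; exists x.
Qed.

Lemma opnorm_le (A : X -> Y) B :
  (forall x, ipnorm ipX x <= 1 -> ipnorm ipY (A x) <= B) -> opnorm ipX ipY A <= B.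
Proof.
move=> h; rewrite /opnorm; apply: ge_sup.
  exists (ipnorm ipY (A 0)), 0 => //=.
  by rewrite /ipnorm ip0l // sqrtr0 ler01.
by move=> _ [y hy <-]; exact: h.
Qed.

End Opnorm.

Lemma ipnorm_le2 (R : realType) (V W : lmodType R) (ipV : V -> V -> R) (ipW : W -> W -> R) x y :
  0 <= ipW y y -> ipV x x <= ipW y y -> ipnorm ipV x <= ipnorm ipW y.
Proof. by move=> h0 h; rewrite /ipnorm ler_sqrt. Qed.

Section Frame.
Variables (R : realType) (V : vectType R) (ipV : V -> V -> R).
Hypothesis hipV : is_inner_product ipV.
Variables (W : lmodType R) (ipW : W -> W -> R).
Hypothesis hipW : is_inner_product ipW.
Variables (Phi : V -> W) (S : V -> V).
Hypotheses (hPhi : lin Phi) (hS : lin S).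
Hypothesis hSs : forall x y, ipV (S x) y = ipV x (S y).
Hypothesis hSS : forall x, S (S x) = adjoint ipV ipW Phi (Phi x).
Local Notation Pa := (adjoint ipV ipW Phi).
Variables (d : nat) (e : 'I_d -> V) (sg : 'I_d -> R).
Hypotheses (he : orthonormal ipV e) (hSe : forall j, S (e j) = sg j *: e j)
  (hexp : forall x, x = \sum_j ipV x (e j) *: e j).

Lemma F1 x y : ipW (Phi x) (Phi y) = ipV (S x) (S y).
Proof. by rewrite -(adjointP hipV hipW hPhi) -hSS hSs. Qed.

Definition eps j := (sg j)^-1 * sg j.
Definition ff j := (sg j)^-1 *: Phi (e j).

Lemma sg_eps j : sg j * eps j = sg j.
Proof.
rewrite /eps; have [->|h] := eqVneq (sg j) 0; first by rewrite !mul0r.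
by rewrite mulVf // mulr1.
Qed.
Lemma eps_sg j : eps j * sg j = sg j. Proof. by rewrite mulrC sg_eps. Qed.
Lemma eps01 j : eps j = 0 \/ eps j = 1.
Proof.
rewrite /eps; have [->|h] := eqVneq (sg j) 0; first by rewrite mulr0; left.
by rewrite mulVf //; right.
Qed.
Lemma eps2 j : eps j * eps j = eps j.
Proof. by case: (eps01 j) => ->; rewrite ?mul0r ?mul1r. Qed.
Lemma eps_ge0 j : 0 <= eps j. Proof. by case: (eps01 j) => ->. Qed.
Lemma eps_le1 j : eps j <= 1. Proof. by case: (eps01 j) => ->. Qed.

Lemma Phi_e j : Phi (e j) = sg j *: ff j.
Proof.
rewrite /ff scalerA; have [h0|h] := eqVneq (sg j) 0.
  rewrite h0 mul0r scale0r; apply: (ip_eq0 hipW).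
  by rewrite F1 hSe h0 scale0r ip0l.
by rewrite mulfV // scale1r.
Qed.

Lemma ff_orth j k : ipW (ff j) (ff k) = (j == k)%:R * eps j.
Proof.
rewrite /ff ipZl // ipZr // F1 !hSe ipZl // ipZr // he.
have [<-|hjk] := eqVneq j k; last by rewrite !mulr0 mul0r.
by rewrite mulr1 mul1r -eps2 /eps; ring.
Qed.

Lemma ff_coef (a : 'I_d -> R) k : ipW (\sum_j a j *: ff j) (ff k) = a k * eps k.
Proof.
rewrite ip_sumZl //; under eq_bigr do rewrite ff_orth.
rewrite -(sum_delta (fun j => a j * eps j)); apply: eq_bigr => j _.
by rewrite [_ * eps j]mulrC mulrA.
Qed.

Lemma Phi_exp x : Phi x = \sum_j (ipV x (e j) * sg j) *: ff j.
Proof.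
rewrite {1}(hexp x) (lin_sum hPhi); apply: eq_bigr => j _.
by rewrite (linZ hPhi) Phi_e scalerA.
Qed.

Lemma Pa_e w j : ipV (Pa w) (e j) = sg j * ipW w (ff j).
Proof. by rewrite (adjointP hipV hipW hPhi) Phi_e ipZr. Qed.

Lemma Pa_exp w : Pa w = \sum_j (sg j * ipW w (ff j)) *: e j.
Proof. by rewrite {1}(hexp (Pa w)); apply: eq_bigr => j _; rewrite Pa_e. Qed.

Lemma S_exp x : S x = \sum_j (sg j * ipV x (e j)) *: e j.
Proof.
rewrite {1}(hexp (S x)); apply: eq_bigr => j _.
by rewrite hSs hSe ipZr.
Qed.

Lemma bessel w : \sum_j eps j * ipW w (ff j) ^+ 2 <= ipW w w.
Proof.
pose c := fun j => ipW w (ff j).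
pose p := \sum_j (eps j * c j) *: ff j.
have hp : ipW p p = \sum_j eps j * c j ^+ 2.
  rewrite {2}/p ip_sumZr //; apply: eq_bigr => k _.
  rewrite ff_coef; have := eps2 k; rewrite /c; move: (eps k) => ek h.
  move: (ipW w (ff k)) => ck; rewrite expr2.
  transitivity (ek * ek * ek * (ck * ck)); first by ring.
  by rewrite !h.
have hwp : ipW w p = \sum_j eps j * c j ^+ 2.
  rewrite /p ip_sumZr //; apply: eq_bigr => k _; rewrite /c; ring.
have := ip_ge0 hipW (w - p).
rewrite !ipBl // !ipBr // hp hwp (ipC hipW p w) hwp.
rewrite -/c; lra.
Qed.

Definition zW w := \sum_j (eps j * ipW w (ff j)) *: e j.
Definition wZ z := \sum_j (eps j * ipV z (e j)) *: ff j.

Lemma S_zW w : S (zW w) = Pa w.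
Proof.
rewrite S_exp Pa_exp; apply: eq_bigr => j _.
by rewrite /zW orth_coef // mulrA sg_eps.
Qed.

Lemma zW_norm w : ipV (zW w) (zW w) <= ipW w w.
Proof.
apply: le_trans (bessel w); rewrite /zW orth_parseval //.
rewrite le_eqVlt; apply/orP; left; apply/eqP; apply: eq_bigr => j _.
have := eps2 j; move: (eps j) (ipW w (ff j)) => ej cj h; rewrite expr2.
by transitivity (ej * ej * (cj * cj)); [ring | rewrite h].
Qed.

Lemma Pa_wZ z : Pa (wZ z) = S z.
Proof.
rewrite Pa_exp S_exp; apply: eq_bigr => j _.
rewrite /wZ ff_coef; congr (_ *: _).
by rewrite mulrAC eps2 mulrA sg_eps.
Qed.

Lemma wZ_norm z : ipW (wZ z) (wZ z) <= ipV z z.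
Proof.
have hN : ipV z z = \sum_j ipV z (e j) * ipV z (e j).
  by rewrite {2}(hexp z) ip_sumZr //; apply: eq_bigr => j _; rewrite mulrC.
rewrite hN {2}/wZ ip_sumZr //.
apply: ler_sum => j _; rewrite ff_coef.
case: (eps01 j) => ->; rewrite ?mul0r ?mul1r ?mulr1 //.
by rewrite -expr2 sqr_ge0.
Qed.

Lemma ipnorm_PhiS y : ipnorm ipW (Phi y) = ipnorm ipV (S y).
Proof. by rewrite /ipnorm F1. Qed.

Lemma PAP_bounded (A : V -> V) : lin A ->
  exists C, forall w, ipnorm ipW (Phi (A (Pa w))) <= C * ipnorm ipW w.
Proof.
move=> hA.
have [C C0 hC] := fin_bounded hipV hipV (lin_comp hS (lin_comp hA hS)).
exists C => w; rewrite -S_zW ipnorm_PhiS.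
apply: le_trans (hC (zW w)) _; apply: ler_wpM2l => //.
by apply: ipnorm_le2; [exact: ip_ge0 | exact: zW_norm].
Qed.

Lemma NORM (A : V -> V) : lin A ->
  opnorm ipW ipW (Phi \o A \o Pa) = opnorm ipV ipV (S \o A \o S).
Proof.
move=> hA.
have [C C0 hC] := fin_bounded hipV hipV (lin_comp hS (lin_comp hA hS)).
apply/le_anti/andP; split.
  apply: opnorm_le => // w hw /=.
  rewrite -S_zW ipnorm_PhiS.
  apply: (opnorm_ub (A := S \o A \o S)) => //; first by exists C.
  apply: le_trans hw; apply: ipnorm_le2; [exact: ip_ge0 | exact: zW_norm].
apply: opnorm_le => // z hz /=.
rewrite -ipnorm_PhiS -Pa_wZ.
apply: (opnorm_ub (A := Phi \o A \o Pa)) => //; first exact: PAP_bounded.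
apply: le_trans hz; apply: ipnorm_le2; [exact: ip_ge0 | exact: wZ_norm].
Qed.


Definition Pj w := \sum_j (eps j * ipW w (ff j)) *: ff j.
Definition Tm z := \sum_k ((sg k)^-1 * ipV z (e k)) *: ff k.
Definition Mof (Q : W -> W) z :=
  \sum_j ((sg j)^-1 * ipW (Q (Tm z)) (ff j)) *: e j.

Lemma Tm_Pa w : Tm (Pa w) = Pj w.
Proof. by apply: eq_bigr => k _; rewrite Pa_e mulrA. Qed.

Lemma Phi_Mof Q z : Phi (Mof Q z) = Pj (Q (Tm z)).
Proof.
rewrite Phi_exp; apply: eq_bigr => j _.
by rewrite /Mof orth_coef // mulrAC.
Qed.

Lemma Pj_Phi x : Pj (Phi x) = Phi x.
Proof.
rewrite {2}Phi_exp /Pj; apply: eq_bigr => k _.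
rewrite {1}Phi_exp ff_coef; congr (_ *: _).
by rewrite -[_ * sg k * _]mulrA sg_eps mulrCA eps_sg.
Qed.

Lemma Pj_sym w w' : ipW (Pj w) w' = ipW w (Pj w').
Proof.
rewrite ip_sumZl // ip_sumZr //; apply: eq_bigr => j _.
by rewrite (ipC hipW (ff j) w'); ring.
Qed.

Lemma Pj_norm w : ipW (Pj w) (Pj w) <= ipW w w.
Proof.
apply: le_trans (bessel w).
rewrite {2}/Pj ip_sumZr // le_eqVlt; apply/orP; left; apply/eqP.
apply: eq_bigr => j _; rewrite ff_coef.
have := eps2 j; move: (eps j) (ipW w (ff j)) => ej cj h; rewrite expr2.
by transitivity (ej * ej * ej * (cj * cj)); [ring | rewrite !h].
Qed.

Lemma Pj_lin : lin Pj.
Proof.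
move=> a w w'; apply: (ip_nondeg hipW) => z.
by rewrite Pj_sym ipDl // ipZl // -!Pj_sym ipDl // ipZl.
Qed.

Lemma Tm_lin : lin Tm.
Proof.
move=> a z z'; rewrite /Tm scaler_sumr -big_split; apply: eq_bigr => k _.
by rewrite /= ipDl // ipZl // [in RHS]scalerA -scalerDl; congr (_ *: _); ring.
Qed.

Lemma Mof_lin Q : lin Q -> lin (Mof Q).
Proof.
move=> hQ a z z'; rewrite /Mof scaler_sumr -big_split; apply: eq_bigr => k _.
by rewrite /= Tm_lin hQ ipDl // ipZl // [in RHS]scalerA -scalerDl; congr (_ *: _); ring.
Qed.

Lemma Mof_nonneg Q z : ipV (Mof Q z) z = ipW (Q (Tm z)) (Tm z).
Proof.
rewrite ip_sumZl // {3}/Tm ip_sumZr //; apply: eq_bigr => j _.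
by rewrite (ipC hipV (e j) z); ring.
Qed.

End Frame.

Lemma frame_pack (R : realType) (V : vectType R) (ipV : V -> V -> R)
  (hipV : is_inner_product ipV) (W : lmodType R) (ipW : W -> W -> R)
  (hipW : is_inner_product ipW) (Phi : V -> W) (S : V -> V)
  (hPhi : lin Phi) (hS : lin S) (hSs : forall x y, ipV (S x) y = ipV x (S y))
  (hSS : forall x, S (S x) = adjoint ipV ipW Phi (Phi x)) :
  (forall A : V -> V, lin A ->
     opnorm ipW ipW (Phi \o A \o adjoint ipV ipW Phi) = opnorm ipV ipV (S \o A \o S)) /\
  (forall A : V -> V, lin A -> exists C, forall w,
     ipnorm ipW (Phi (A (adjoint ipV ipW Phi w))) <= C * ipnorm ipW w) /\
  exists (P : W -> W) (M : (W -> W) -> V -> V), [/\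
    lin P, (forall w w', ipW (P w) w' = ipW w (P w')),
    (forall w, ipW (P w) (P w) <= ipW w w) & (forall x, P (Phi x) = Phi x)] /\ [/\
    (forall Q, lin Q -> lin (M Q)),
    (forall Q z, exists y, ipV (M Q z) z = ipW (Q y) y) &
    (forall Q w, Phi (M Q (adjoint ipV ipW Phi w)) = P (Q (P w)))].
Proof.
have [d [e [he hSe hexp]]] := spectral hipV hS hSs.
pose sg := fun j => ipV (S (e j)) (e j).
split; first by move=> A hA; exact: (NORM hipV hipW hPhi hS hSs hSS he hSe hexp hA).
split; first by move=> A hA; exact: (PAP_bounded hipV hipW hPhi hS hSs hSS he hSe hexp hA).
exists (Pj ipW Phi e sg), (Mof ipV ipW Phi e sg); split.
  split.
  - exact: (Pj_lin hipW).
  - exact: (Pj_sym hipW).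
  - exact: (Pj_norm hipV hipW hPhi hSs hSS he hSe).
  - exact: (Pj_Phi hipV hipW hPhi hSs hSS he hSe hexp).
split.
- by move=> Q hQ; exact: (Mof_lin hipV hipW Phi e sg hQ).
- by move=> Q z; eexists; exact: (Mof_nonneg hipV hipW Phi e sg Q z).
- move=> Q w; rewrite (Phi_Mof hipV hipW hPhi hSs hSS he hSe hexp).
  by rewrite (Tm_Pa hipV hipW hPhi hSs hSS hSe).
Qed.

Lemma ip_pow_ip (R : realType) (U : lmodType R) (ipU : U -> U -> R)
  (h : is_inner_product ipU) (n : nat) : is_inner_product (@ip_pow R U ipU n).
Proof.
rewrite /ip_pow; split.
- by move=> x y; apply: eq_bigr => i _; exact: ipC.
- move=> a x y z; rewrite mulr_sumr -big_split /=; apply: eq_bigr => i _.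
  by rewrite !ffunE ipDl // ipZl.
- by move=> x; apply: sumr_ge0 => i _; exact: ip_ge0.
- move=> x hx; apply/ffunP => i; rewrite ffunE; apply: (ip_eq0 h).
  have hge : forall k : 'I_n, true -> 0 <= ipU (x k) (x k) by move=> k _; exact: ip_ge0.
  exact: (@psumr_eq0P _ _ _ _ hge hx i isT).
Qed.

Section Aux.
Variables (R : realType) (V : vectType R) (ip : V -> V -> R).
Hypothesis hip : is_inner_product ip.

Lemma adjoint_sym (T : V -> V) : lin T -> (forall x y, ip (T x) y = ip x (T y)) ->
  adjoint ip ip T = T.
Proof.
move=> hT hs; apply/funext => w; apply: (ip_nondeg hip) => z.
by rewrite (adjointP hip hip hT) hs.
Qed.

Lemma bounded_of_lin (T : V -> V) : lin T -> is_bounded_op ip ip T.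
Proof.
move=> hT; split => //; have [C _ hC] := fin_bounded hip hip hT; by exists C.
Qed.

Lemma sqrt_exists (K : V -> V) : lin K -> (forall x y, ip (K x) y = ip x (K y)) ->
  (forall x, 0 <= ip (K x) x) ->
  exists S, [/\ is_bounded_op ip ip S, adjoint ip ip S = S, is_nonneg_op ip S & S \o S = K].
Proof.
move=> hK hs hp.
have [d [e [he hKe hexp]]] := spectral hip hK hs.
pose lam := fun j => ip (K (e j)) (e j).
pose S := fun x => \sum_j (Num.sqrt (lam j) * ip x (e j)) *: e j.
have hSl : lin S.
  move=> a x y; rewrite /S scaler_sumr -big_split /=; apply: eq_bigr => j _.
  by rewrite ipDl // ipZl // [in RHS]scalerA -scalerDl; congr (_ *: _); ring.
have hSe : forall x j, ip (S x) (e j) = Num.sqrt (lam j) * ip x (e j).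
  by move=> x j; rewrite /S orth_coef.
have hSs : forall x y, ip (S x) y = ip x (S y).
  move=> x y; rewrite {1}/S ip_sumZl // /S ip_sumZr //; apply: eq_bigr => j _.
  by rewrite (ipC hip (e j) y); ring.
exists S; split.
- exact: bounded_of_lin.
- exact: adjoint_sym.
- move=> x; rewrite /S ip_sumZl //; apply: sumr_ge0 => j _.
  by rewrite (ipC hip (e j) x) -mulrA -expr2 mulr_ge0 ?sqrtr_ge0 ?sqr_ge0.
- apply/funext => x /=; rewrite [RHS](hexp (K x)) {1}/S; apply: eq_bigr => j _.
  rewrite hSe mulrA -expr2 sqr_sqrtr ?hp //; congr (_ *: _).
  by rewrite hs hKe ipZr.
Qed.

End Aux.

Lemma adjoint_comp (R : realType) (U V : vectType R) (W : lmodType R)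
  (ipU : U -> U -> R) (ipV : V -> V -> R) (ipW : W -> W -> R)
  (hU : is_inner_product ipU) (hV : is_inner_product ipV) (hW : is_inner_product ipW)
  (Phi : V -> W) (A : U -> W) : lin Phi -> lin A ->
  forall y, adjoint ipU ipV (adjoint ipV ipW Phi \o A) y = adjoint ipU ipW A (Phi y).
Proof.
move=> hPhi hA y; apply: (ip_nondeg hU) => x.
have hk : lin (adjoint ipV ipW Phi \o A) by apply: lin_comp => //; exact: adjoint_lin.
rewrite (adjointP hU hV hk) (adjointP hU hW hA) /= (ipC hV) (adjointP hV hW hPhi).
exact: ipC.
Qed.

Unset Implicit Arguments.
Theorem corollary1 (R : realType)
  (U : vectType R) (ipU : U -> U -> R) (hU : is_hilbert ipU)
  (W : lmodType R) (ipW : W -> W -> R) (hW : is_hilbert ipW)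
  (phi : U -> U -> W)
  (hphi : forall v : U, is_bounded_op ipU ipW (phi v))
  (n : nat) (u y : 'I_n -> U) (gamma : R) (hgamma : 0 < gamma) :
  let ipUn := @ip_pow R U ipU n in
  let Phi : {ffun 'I_n -> U} -> W := fun v => \sum_(i < n) phi (u i) (v i) in
  let PhiA : W -> {ffun 'I_n -> U} := adjoint ipUn ipW Phi in
  let kappa : U -> U -> {ffun 'I_n -> U} := fun v => PhiA \o phi v in
  let Kb : 'I_n -> U -> {ffun 'I_n -> U} := fun i => kappa (u i) in
  let K : {ffun 'I_n -> U} -> {ffun 'I_n -> U} := PhiA \o Phi in
  let Ksq := op_sqrt ipUn K in
  let L : (W -> W) -> R := fun Q =>
    \sum_(i < n) ipnorm ipU
       (adjoint ipU ipW (phi (u i)) (Q (phi (u i) (u i))) - y i) ^+ 2 in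
  let objQ : (W -> W) -> R := fun Q => L Q + gamma * opnorm ipW ipW Q in
  let objM : ({ffun 'I_n -> U} -> {ffun 'I_n -> U}) -> R := fun M =>
    \sum_(i < n) ipnorm ipU
       (adjoint ipU ipUn (Kb i) (M (Kb i (u i))) - y i) ^+ 2
    + gamma * opnorm ipUn ipUn (Ksq \o M \o Ksq) in
  let solQ : (W -> W) -> Prop := fun Q =>
    is_Bplus ipW Q /\ forall Q', is_Bplus ipW Q' -> objQ Q <= objQ Q' in
  let solM : ({ffun 'I_n -> U} -> {ffun 'I_n -> U}) -> Prop := fun M =>
    is_Bplus ipUn M /\ forall M', is_Bplus ipUn M' -> objM M <= objM M' in
  (exists Q, solQ Q) ->
  (exists M, solM M) /\
  forall M, solM M ->
    let Qhat := Phi \o M \o PhiA in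
    solQ Qhat /\
    forall v : U,
      adjoint ipU ipW (phi v) (Qhat (phi v v))
      = adjoint ipU ipUn (kappa v) (M (kappa v v)).

Proof.
move=> ipUn Phi PhiA kappa Kb K Ksq L objQ objM solQ solM [Q0 hQ0].
have hipU : is_inner_product ipU by case: hU.
have hipW : is_inner_product ipW by case: hW.
have hipV : is_inner_product ipUn := ip_pow_ip hipU n.
have hphil : forall v, lin (phi v) by move=> v; case: (hphi v).
have hPhi : lin Phi.
  move=> a x1 x2; rewrite /Phi scaler_sumr -big_split /=; apply: eq_bigr => i _.
  by rewrite !ffunE; exact: hphil.
have adjPhi : forall w x, ipUn (PhiA w) x = ipW w (Phi x) := adjointP hipV hipW hPhi.
have hPA : lin PhiA := adjoint_lin hipV hipW hPhi.
have hK : lin K := lin_comp hPA hPhi.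
have hKs : forall x1 x2, ipUn (K x1) x2 = ipUn x1 (K x2).
  by move=> x1 x2; rewrite /= adjPhi (ipC hipV x1) adjPhi (ipC hipW).
have hKp : forall x, 0 <= ipUn (K x) x.
  by move=> x; rewrite /= adjPhi; exact: ip_ge0.
have [hSb hSadj hSnn hSS] : [/\ is_bounded_op ipUn ipUn Ksq, adjoint ipUn ipUn Ksq = Ksq,
    is_nonneg_op ipUn Ksq & Ksq \o Ksq = K].
  have [S0 hS0] := sqrt_exists hipV hK hKs hKp.
  have := @xgetPex _ (fun _ => 0) [set S : {ffun 'I_n -> U} -> {ffun 'I_n -> U} |
    [/\ is_bounded_op ipUn ipUn S, adjoint ipUn ipUn S = S, is_nonneg_op ipUn S & S \o S = K]].
  by apply; exists S0.
have hSl : lin Ksq by case: hSb.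
have hSs : forall x1 x2, ipUn (Ksq x1) x2 = ipUn x1 (Ksq x2).
  by move=> x1 x2; have := adjointP hipV hipV hSl x1 x2; rewrite hSadj.
have hSS' : forall x, Ksq (Ksq x) = PhiA (Phi x).
  by move=> x; have := congr1 (fun f => f x) hSS.
have [hNORM [hPAPb [P [Mf [[hPl hPs hPn hPPhi] [hMl hMnn hMrel]]]]]] :=
  frame_pack hipV hipW hPhi hSl hSs hSS'.
have adjcomp : forall v y0, adjoint ipU ipUn (kappa v) y0 = adjoint ipU ipW (phi v) (Phi y0).
  by move=> v; exact: (adjoint_comp hipU hipV hipW hPhi (hphil v)).
have objM_eq : forall M', lin M' -> objM M' = objQ (Phi \o M' \o PhiA).
  move=> M' hM'; rewrite /objM /objQ /L; congr (_ + _ * _).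
    by apply: eq_bigr => i _; rewrite /Kb adjcomp.
  by rewrite hNORM.
have QB : forall M', is_Bplus ipUn M' -> is_Bplus ipW (Phi \o M' \o PhiA).
  move=> M' [[hM'l _] hM'n]; split; first split.
  - exact: (lin_comp (lin_comp hPhi hM'l) hPA).
  - exact: hPAPb.
  - move=> w /=; rewrite (ipC hipW) -adjPhi (ipC hipV); exact: hM'n.
case: (hQ0) => [[[hQ0l hQ0b] hQ0n] hQ0min].
pose M0 := Mf Q0.
have hM0l : lin M0 by exact: hMl.
have hM0 : is_Bplus ipUn M0.
  split; first exact: bounded_of_lin.
  by move=> z; have [y0 ->] := hMnn Q0 z; exact: hQ0n.
have hM0rel : Phi \o M0 \o PhiA = P \o Q0 \o P.
  by apply/funext => w; exact: hMrel.
have hdelta : forall i x, Phi [ffun k => if k == i then x else 0] = phi (u i) x.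
  move=> i x; rewrite /Phi (bigD1 i) //= ffunE eqxx big1 ?addr0 // => k /negbTE hk.
  by rewrite ffunE hk; exact: (lin0 (hphil _)).
have hPphi : forall i x, P (phi (u i) x) = phi (u i) x.
  by move=> i x; rewrite -hdelta hPPhi.
have hadjP : forall i y0, adjoint ipU ipW (phi (u i)) (P y0) = adjoint ipU ipW (phi (u i)) y0.
  move=> i y0; apply: (ip_nondeg hipU) => x.
  by rewrite !(adjointP hipU hipW (hphil _)) hPs hPphi.
have hPQP : objQ (P \o Q0 \o P) <= objQ Q0.
  rewrite /objQ /L; apply: lerD.
    rewrite le_eqVlt; apply/orP; left; apply/eqP; apply: eq_bigr => i _ /=.
    by rewrite hadjP hPphi.
  rewrite ler_pM2l //; apply: opnorm_le => // w hw /=.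
  have hPn' : forall y0, ipnorm ipW (P y0) <= ipnorm ipW y0.
    by move=> y0; apply: (ipnorm_le hipW); exact: hPn.
  apply: le_trans (hPn' _) _; apply: opnorm_ub => //.
  exact: le_trans (hPn' _) hw.
have hobjM0 : objM M0 <= objQ Q0 by rewrite objM_eq // hM0rel.
have solM0 : solM M0.
  split => // M' hM'; apply: le_trans hobjM0 _.
  rewrite objM_eq; last by case: hM' => [[]].
  by apply: hQ0min; exact: QB.
split; first by exists M0.
move=> M hM Qhat; split.
  split; first exact: QB (hM.1).
  move=> Q' hQ'; rewrite /Qhat -objM_eq; last by case: hM => [[[]]].
  apply: le_trans (hM.2 _ hM0) _; apply: le_trans hobjM0 _.
  exact: hQ0min.
by move=> v; rewrite /Qhat /= adjcomp.
Qed.
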